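(* Let $\mathcal{X}$ be a finite set, $P_X$ a probability distribution on $\mathcal{X}$, $\rho>0$, and let $\mathbf{X}=(X_1,\dots,X_n)$ be i.i.d. with law $P_X$. Let $\mathcal{A}$ be a nonempty countable set of agents; a strategy consists of, for each $a\in\mathcal{A}$, a (possibly random) sequence of guesses $\{\hat{\mathbf{X}}^{(a)}_k:k\ge1\}$ in $\mathcal{X}^n$ independent of $\mathbf{X}$. Let $\Pi$ be the set of bijections $\pi:\mathbb{N}^+\to\mathcal{A}\times\mathbb{N}^+$, and for $\pi(i)=(a_i,k_i)$ let $G(\mathbf{X},\pi(\hat{\mathbf{X}}_1^\infty))=\inf\{i\ge1:\hat{\mathbf{X}}^{(a_i)}_{k_i}=\mathbf{X}\}$. Let $G^*(\mathbf{X})$ be the position of $\mathbf{X}$ in the list of all elements of $\mathcal{X}^n$ sorted by decreasing probability under $P_X^{\otimes n}$ (ties broken arbitrarily). Then $$\inf_{\text{strategies}}\ \sup_{\pi\in\Pi}\ \mathbb{E}\big[G(\mathbf{X},\pi(\hat{\mathbf{X}}_1^\infty))^\rho\big]\ \ge\ \mathbb{E}\big[G^*(\mathbf{X})^\rho\big].$$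
   Context: Expectations are over $\mathbf{X}$ and the randomness of the guesses. *)

(* Defs.v *)
From HB Require Import structures.
From mathcomp Require Import all_boot all_order all_algebra.
From mathcomp Require Import all_classical all_reals all_analysis.
Set Implicit Arguments. Unset Strict Implicit. Unset Printing Implicit Defensive.
Import Order.TTheory GRing.Theory Num.Theory.
Local Open Scope ring_scope.
Local Open Scope classical_set_scope.

Definition prodP (R : realType) (X : finType) (P : X -> R) (n : nat)
  (x : n.-tuple X) : R := \prod_(i < n) P (tnth x i).

(* Indices are 0-based in Rocq: pi i is the (i+1)-th query, and the
   guess index k (in nat) stands for the (k+1)-th guess of an agent.
   The infimum of the empty set is +oo. *)
Definition guess_time (R : realType) (A T : Type) (pi : nat -> A * nat)
  (g : A -> nat -> T) (x : T) : \bar R :=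
  ereal_inf [set ((i.+1)%:R)%:E | i in [set i : nat | g (pi i).1 (pi i).2 = x]].

(* Main.v *)
Require Import Defs.
From HB Require Import structures.
From mathcomp Require Import all_boot all_order all_algebra.
From mathcomp Require Import all_classical all_reals all_analysis.
From mathcomp Require Import ring lra.
Import Order.TTheory GRing.Theory Num.Theory.
Local Open Scope ring_scope.

Lemma layer_one (R : realType) (f : nat -> R) (M k : nat) : (k <= M)%N ->
  f k = f 0%N + \sum_(j < M) (f j.+1 - f j) * (1 - (k <= j)%:R).
Proof.
move=> kM.
have -> : \sum_(j < M) (f j.+1 - f j) * (1 - (k <= j)%:R) =
          \sum_(0 <= j < M | (j < k)%N) (f j.+1 - f j).
  rewrite [RHS]big_mkcond [RHS]big_mkord /=; apply: eq_bigr => j _.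
  by case: leqP => _ /=; rewrite ?subrr ?mulr0 ?subr0 ?mulr1.
have := telescope_sumr f (leq0n k); rewrite (big_nat_widen _ _ _ _ _ kM) => ->.
by rewrite addrC subrK.
Qed.

Lemma layer (R : realType) (T : finType) (P : T -> R) (f : nat -> R)
  (k : T -> nat) (M : nat) : (forall x, k x <= M)%N ->
  \sum_x P x * f (k x) = f 0%N * \sum_x P x +
    \sum_(j < M) (f j.+1 - f j) * (\sum_x P x - \sum_x P x * (k x <= j)%:R).
Proof.
move=> kM.
under eq_bigr => x _ do rewrite (@layer_one _ f _ _ (kM x)) mulrDr.
rewrite big_split /= mulr_sumr; congr (_ + _).
  by apply: eq_bigr => x _; rewrite mulrC.
under eq_bigr => x _ do rewrite mulr_sumr.
rewrite exchange_big /=; apply: eq_bigr => j _.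
rewrite -sumrB mulr_sumr; apply: eq_bigr => x _.
by ring.
Qed.


Lemma head_le (R : realType) (T : finType) (P : T -> R)
  (P_ge0 : forall x, 0 <= P x)
  (sigma : T -> 'I_#|T|) (sigma_bij : bijective sigma)
  (sigma_sorted : forall x y, P y < P x -> (sigma x < sigma y)%N)
  (h : T -> nat) (h_inj : forall x y, 0 < P x -> 0 < P y -> h x = h y -> x = y)
  (j : nat) :
  \sum_x P x * (h x <= j)%:R <= \sum_x P x * (sigma x <= j)%:R.
Proof.
set Sh := [set x | (0 < P x) && (h x <= j)%N].
set Ss := [set x | (sigma x <= j)%N].
have E1 : \sum_x P x * (h x <= j)%:R = \sum_(x in Sh) P x.
  rewrite [RHS]big_mkcond /=; apply: eq_bigr => x _; rewrite inE.
  case: (h x <= j)%N; rewrite ?mulr1 ?mulr0 ?andbT ?andbF //.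
  rewrite lt0r P_ge0 andbT; by case: eqP.
have E2 : \sum_x P x * (sigma x <= j)%:R = \sum_(x in Ss) P x.
  rewrite [RHS]big_mkcond /=; apply: eq_bigr => x _; rewrite inE.
  by case: (sigma x <= j)%N; rewrite ?mulr1 ?mulr0.
have c1 : (#|Sh| <= j.+1)%N.
  rewrite cardE -(size_map h) -[j.+1](size_iota 0).
  apply: uniq_leq_size.
    rewrite map_inj_in_uniq ?enum_uniq // => x y.
    rewrite !mem_enum !inE => /andP[px _] /andP[py _]; exact: h_inj.
  move=> y /mapP[x]; rewrite mem_enum inE => /andP[_ hx] ->.
  by rewrite mem_iota /= add0n ltnS.
have cardSh : (#|Sh| <= #|Ss|)%N.
  case: (leqP #|T| j.+1) => hN.
    have -> : Ss = [set: T].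
      apply/setP => x; rewrite !inE.
      by rewrite -ltnS; exact: leq_trans (ltn_ord _) hN.
    by rewrite cardsT max_card.
  have [gi sg gs] := sigma_bij.
  pose F := fun i : 'I_j.+1 => gi (widen_ord (ltnW hN) i).
  have injF : injective F.
    move=> a b; rewrite /F => /(can_inj gs) /(congr1 val) /= ab; exact: val_inj.
  apply: (leq_trans c1).
  have <- : #|[set F i | i in [set: 'I_j.+1]]| = j.+1.
    by rewrite card_imset // cardsT card_ord.
  apply/subset_leq_card/fintype.subsetP => _ /imsetP[i _ ->].
  by rewrite inE /F gs /= -ltnS.
rewrite E1 E2 (big_setID Ss) [X in _ <= X](big_setID Sh) /= finset.setIC lerD2l.
set D1 := Sh :\: Ss; set D2 := Ss :\: Sh.
have cD : (#|D1| <= #|D2|)%N.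
  by move: cardSh; rewrite -(cardsID Ss Sh) -(cardsID Sh Ss) finset.setIC leq_add2l.
have key : forall x y, x \in D1 -> y \in D2 -> P x <= P y.
  move=> x y; rewrite !inE => /andP[xS _] /andP[_ yS].
  rewrite leNgt; apply/negP => /sigma_sorted sxy.
  by move: xS; rewrite (leq_trans (ltnW sxy) yS).
case: (posnP #|D2|) => [D2e | D2p].
  have D1e : #|D1| = 0%N by apply/eqP; rewrite -leqn0 -D2e.
  rewrite (cards0_eq D1e) big_set0; exact: sumr_ge0.
rewrite -(ler_pMn2r D2p) -sumr_const.
apply: (@le_trans _ _ (\sum_(y in D2) \sum_(x in D1) P y)).
  apply: ler_sum => y yD; apply: ler_sum => x xD; exact: key.
have sc : forall y, \sum_(x in D1) P y = P y *+ #|D1| by move=> y; rewrite sumr_const.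
rewrite (eq_bigr _ (fun y _ => sc y)).
rewrite sumrMnl -[X in X <= _]mulr_natr -[X in _ <= X]mulr_natr; apply: ler_wpM2l; first exact: sumr_ge0.
by rewrite ler_nat.
Qed.

Lemma rearr (R : realType) (T : finType) (P : T -> R)
  (P_ge0 : forall x, 0 <= P x)
  (sigma : T -> 'I_#|T|) (sigma_bij : bijective sigma)
  (sigma_sorted : forall x y, P y < P x -> (sigma x < sigma y)%N)
  (f : nat -> R) (f_nd : forall m n, (m <= n)%N -> f m <= f n)
  (h : T -> nat) (h_inj : forall x y, 0 < P x -> 0 < P y -> h x = h y -> x = y) :
  \sum_x P x * f (sigma x) <= \sum_x P x * f (h x).
Proof.
set M := (#|T| + \sum_x h x)%N.
have hM : forall x, (h x <= M)%N.
  move=> x; apply: leq_trans (leq_addl _ _).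
  by rewrite (bigD1 x) //= leq_addr.
have sM : forall x, (sigma x <= M)%N.
  by move=> x; apply: ltnW; apply: leq_trans (ltn_ord _) (leq_addr _ _).
rewrite (@layer _ _ P f (fun x => nat_of_ord (sigma x)) M sM) (@layer _ _ P f h M hM) lerD2l.
apply: ler_sum => j _; apply: ler_wpM2l.
  by rewrite subr_ge0; apply: f_nd.
by rewrite lerD2l lerN2; exact: head_le.
Qed.
Local Open Scope classical_set_scope.
Lemma exists_bij (A : countType) (a0 : A) :
  exists pi : nat -> A * nat, bijective pi.
Proof.
have Hinf : infinite_set [set: A * nat].
  apply/infiniteP.
  have := @card_ge_preimage nat (A * nat) setT (fun n => (a0, n)).
  rewrite preimage_setT; by apply => x y _ _ [->].
have /card_esym/card_bijP[F [G FG GF]] :=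
  eq_card_nat (countableP [set: A * nat]) Hinf.
exists (fun n => sval (F (exist _ n (in_setT n)))).
exists (fun p => sval (G (exist _ p (in_setT p)))).
  move=> n /=.
  have -> : exist _ (sval (F (exist _ n (in_setT n)))) (in_setT _) = F (exist _ n (in_setT n)).
    by apply: val_inj.
  by rewrite FG.
move=> p /=.
have -> : exist _ (sval (G (exist _ p (in_setT p)))) (in_setT _) = G (exist _ p (in_setT p)).
  by apply: val_inj.
by rewrite GF.
Qed.

Local Open Scope ereal_scope.

Lemma pointwise (R : realType) (T : finType) (Q : T -> R)
  (Q_ge0 : forall x, (0 <= Q x)%R)
  (sigma : T -> 'I_#|T|) (sigma_bij : bijective sigma)
  (sigma_sorted : forall x y, (Q y < Q x)%R -> (sigma x < sigma y)%N)
  (rho : R) (rho_gt0 : (0 < rho)%R) (A : Type) (pi : nat -> A * nat)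
  (gw : A -> nat -> T) :
  (\sum_x Q x * ((sigma x).+1%:R `^ rho))%R%:E <=
  \sum_x (Q x)%:E * (guess_time R pi gw x) `^ rho.
Proof.
case: (pselect (exists x, (0 < Q x)%R /\ forall i, gw (pi i).1 (pi i).2 <> x)).
  move=> [x [Qx nx]].
  have Gx : guess_time R pi gw x = +oo.
    by apply/ereal_inf_pinfty => y [i hi hy]; case: (nx i hi).
  have tx : (Q x)%:E * (guess_time R pi gw x) `^ rho = +oo.
    by rewrite Gx poweRyr ?gt_eqF // gt0_muley // lte_fin.
  rewrite [X in _ <= X](bigD1 x) //= tx addye ?leey //.
  apply/negbT/gt_eqF; apply: (lt_le_trans ltNy0).
  apply: sume_ge0 => y _; apply: mule_ge0; first by rewrite lee_fin.
  case: (guess_time R pi gw y) => [r| |] /=; rewrite ?lee_fin ?powR_ge0 //.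
    by rewrite gt_eqF.
  by case: eqP.
move=> H.
have H' : forall x, (0 < Q x)%R -> exists i, gw (pi i).1 (pi i).2 == x.
  move=> x Qx; apply: contrapT => nex; apply: H; exists x; split => // i hi.
  by apply: nex; exists i; apply/eqP.
pose h x := match pselect (exists i, gw (pi i).1 (pi i).2 == x) with
  | left e => ex_minn e | right _ => 0%N end.
have hP : forall x, (exists i, gw (pi i).1 (pi i).2 == x) ->
    gw (pi (h x)).1 (pi (h x)).2 == x /\
    forall i, gw (pi i).1 (pi i).2 == x -> (h x <= i)%N.
  move=> x ex; rewrite /h; case: pselect => // e.
  by case: ex_minnP => m Hm Hmin; split.
have hG : forall x, (exists i, gw (pi i).1 (pi i).2 == x) ->
    guess_time R pi gw x = ((h x).+1%:R)%:E.
  move=> x ex; have [hx hmin] := hP x ex.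
  apply/le_anti/andP; split.
    by apply: ereal_inf_lbound; exists (h x) => //; apply/eqP.
  apply/ereal_infP => _ [i hi <-]; rewrite lee_fin ler_nat ltnS.
  by apply: hmin; apply/eqP.
have -> : \sum_x (Q x)%:E * (guess_time R pi gw x) `^ rho =
          \sum_x (Q x * ((h x).+1%:R `^ rho))%R%:E.
  apply: eq_bigr => x _.
  case: (pselect (exists i, gw (pi i).1 (pi i).2 == x)) => ex.
    by rewrite hG // poweR_EFin EFinM.
  have -> : Q x = 0%R.
    apply/eqP; rewrite eq_le Q_ge0 andbT leNgt; apply/negP => /H' //.
  by rewrite mul0e mul0r.
rewrite sumEFin lee_fin.
apply: (@rearr _ _ Q Q_ge0 sigma sigma_bij sigma_sorted (fun k => (k.+1%:R `^ rho)%R)).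
  move=> m k mk; apply: ge0_ler_powR; rewrite ?nnegrE ?ler_nat ?ltnS //; exact: ltW.
move=> x y Qx Qy hxy.
have [hx _] := hP x (H' x Qx); have [hy _] := hP y (H' y Qy).
by move: hx hy; rewrite hxy => /eqP <- /eqP.
Qed.

Theorem lemma1 (R : realType) (X : finType) (P : X -> R)
  (P_ge0 : forall x, (0 <= P x)%R) (P_sum : (\sum_(x : X) P x)%R = 1%R)
  (rho : R) (rho_gt0 : (0 < rho)%R) (n : nat)
  (A : countType) (A_ne : [set: A] !=set0)
  (d : measure_display) (Omega : measurableType d) (mu : probability Omega R)
  (g : Omega -> A -> nat -> n.-tuple X)
  (g_meas : forall a k x, measurable [set w | g w a k = x])
  (sigma : n.-tuple X -> 'I_#|{: n.-tuple X}|)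
  (sigma_bij : bijective sigma)
  (sigma_sorted : forall x y : n.-tuple X,
      (prodP P y < prodP P x)%R -> (sigma x < sigma y)%N) :
  ereal_sup [set \int[mu]_w
                 (\sum_(x : n.-tuple X)
                    (prodP P x)%:E * (guess_time R pi (g w) x) `^ rho)
            | pi in [set pi : nat -> A * nat | bijective pi]]
  >= \sum_(x : n.-tuple X) (prodP P x)%:E * (((sigma x).+1%:R `^ rho)%R)%:E.
Proof.
have [a0 _] := A_ne.
have [pi pib] := @exists_bij A a0.
have Q_ge0 : forall x : n.-tuple X, (0 <= prodP P x)%R.
  by move=> x; apply: prodr_ge0 => i _.
apply: (@le_trans _ _ (\int[mu]_w (\sum_(x : n.-tuple X)
                    (prodP P x)%:E * (guess_time R pi (g w) x) `^ rho))); last first.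
  by apply: ereal_sup_ubound; exists pi.
set c := (\sum_(x : n.-tuple X) prodP P x * ((sigma x).+1%:R `^ rho))%R.
have -> : \sum_(x : n.-tuple X) (prodP P x)%:E * (((sigma x).+1%:R `^ rho)%R)%:E = c%:E.
  by rewrite /c -sumEFin; apply: eq_bigr => x _; rewrite EFinM.
have c_ge0 : (0 <= c)%R.
  by apply: sumr_ge0 => x _; apply: mulr_ge0 => //; exact: powR_ge0.
have <- : \int[mu]_w (cst c%:E) w = c%:E.
  rewrite integral_cst //; transitivity (c%:E * 1); last exact: mule1.
  congr (_ * _); exact: probability_setT.
rewrite !ge0_integralTE; last 2 first.
- move=> w; apply: sume_ge0 => x _; apply: mule_ge0; first by rewrite lee_fin.
  exact: poweR_ge0.
- by move=> w; rewrite lee_fin.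
apply: le_ereal_sup => _ [hh Hh <-]; exists hh => // w.
apply: le_trans (Hh w) _.
exact: (@pointwise R _ (fun x => prodP P x) Q_ge0 sigma sigma_bij sigma_sorted rho rho_gt0 A pi (g w)).
Qed.
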